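(* Let $n\ge 2$, $b_i>0$, $\alpha_i>0$ for $i=1,\dots,n$ with $\alpha_i\ne\alpha_{i+1}$ for all $i$, and let $g(t)=\sum_{i=1}^n b_ie^{-\alpha_i t}$. Then $$\dot g(t)^2-g(t)\ddot g(t)<0\quad\text{for all } t\ge 0.$$ Consequently, $g\,\mathds{1}_{[0,\infty)}$ is nonnegative but not log-concave; in particular, strongly unimodal LTI systems are not closed under parallel interconnection.
   Context: A function $f:\mathbb{R}\to\mathbb{R}_{\ge0}$ is log-concave if $f(\lambda x+(1-\lambda)y)\ge f(x)^\lambda f(y)^{1-\lambda}$ for all $x,y\in\mathbb{R}$ and $\lambda\in[0,1]$. A causal LTI system with impulse response $g$ maps $u$ to $g\ast u$, $(g\ast u)(t)=\int g(t-\tau)u(\tau)d\tau$; it is strongly unimodal if it maps every quasi-concave (unimodal) function to a quasi-concave function, where $f$ is quasi-concave if $f(\lambda x+(1-\lambda)y)\ge\min\{f(x),f(y)\}$. The parallel interconnection of systems with impulse responses $g_1,g_2$ has impulse response $g_1+g_2$; each first-order system with impulse response $b_ie^{-\alpha_i t}\mathds{1}_{[0,\infty)}$, $b_i,\alpha_i>0$, is strongly unimodal. *)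

(* Defs.v *)
From Stdlib Require Import Reals.
From Coquelicot Require Export Coquelicot.
Open Scope R_scope.

Definition rpow (x y : R) : R :=
  if Req_EM_T x 0 then (if Req_EM_T y 0 then 1 else 0) else Rpower x y.

Definition log_concave (f : R -> R) : Prop :=
  (forall x, 0 <= f x) /\
  forall x y lam, 0 <= lam <= 1 ->
    f (lam * x + (1 - lam) * y) >= rpow (f x) lam * rpow (f y) (1 - lam).

Definition causal (g : R -> R) : R -> R :=
  fun t => if Rle_dec 0 t then g t else 0.

(* g(t) = sum_{i=0}^{n-1} b_i e^{-a_i t}  (0-based indices) *)
Definition expsum (n : nat) (b a : nat -> R) : R -> R :=
  fun t => sum_f_R0 (fun i => b i * exp (- a i * t)) (n - 1).

(* Main.v *)
Require Import Defs.
From Stdlib Require Import Reals Lra Psatz.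
From Coquelicot Require Import Coquelicot.
Open Scope R_scope.

Lemma quad_nonneg (w u : nat -> R) (c : R) (m : nat) :
  (forall i, (i <= m)%nat -> 0 <= w i) ->
  0 <= sum_f_R0 (fun i => w i * u i ^ 2) m - 2 * c * sum_f_R0 (fun i => w i * u i) m
       + c ^ 2 * sum_f_R0 w m.
Proof.
  induction m as [|m IH]; intros Hw.
  - simpl. assert (0 <= w 0%nat) by (apply Hw; lia).
    assert (0 <= w 0%nat * (u 0%nat - c)^2) by (apply Rmult_le_pos; [lra | apply pow2_ge_0]).
    nra.
  - rewrite !tech5. assert (0 <= w (S m)) by (apply Hw; lia).
    assert (0 <= w (S m) * (u (S m) - c)^2) by (apply Rmult_le_pos; [lra | apply pow2_ge_0]).
    assert (HI := IH (fun i Hi => Hw i (le_S _ _ Hi))). nra.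
Qed.

Lemma cs_strict (w u : nat -> R) (m : nat) :
  (1 <= m)%nat ->
  (forall i, (i <= m)%nat -> 0 < w i) ->
  u 0%nat <> u 1%nat ->
  0 < sum_f_R0 w m * sum_f_R0 (fun i => w i * u i ^ 2) m
      - (sum_f_R0 (fun i => w i * u i) m) ^ 2.
Proof.
  intros Hm. induction Hm as [|m Hm IH]; intros Hw Hu.
  - simpl.
    assert (0 < w 0%nat) by (apply Hw; lia).
    assert (0 < w 1%nat) by (apply Hw; lia).
    assert (0 < (u 0%nat - u 1%nat)^2).
    { assert (u 0%nat - u 1%nat <> 0) by lra. nra. }
    assert (0 < w 0%nat * w 1%nat) by nra.
    assert (0 < w 0%nat * w 1%nat * (u 0%nat - u 1%nat)^2) by nra.
    nra.
  - rewrite !tech5.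
    assert (HQ := quad_nonneg w u (u (S m)) m
                    (fun i Hi => Rlt_le _ _ (Hw i (le_S _ _ Hi)))).
    assert (HD := IH (fun i Hi => Hw i (le_S _ _ Hi)) Hu).
    assert (0 < w (S m)) by (apply Hw; lia).
    set (S0 := sum_f_R0 w m) in *.
    set (S1 := sum_f_R0 (fun i => w i * u i) m) in *.
    set (S2 := sum_f_R0 (fun i => w i * u i ^ 2) m) in *.
    set (Q := S2 - 2 * u (S m) * S1 + u (S m) ^ 2 * S0) in HQ.
    assert (0 <= w (S m) * Q) by (apply Rmult_le_pos; lra).
    unfold Q in *. nra.
Qed.

Lemma sum_deriv (c a : nat -> R) (m : nat) (t : R) :
  is_derive (fun t => sum_f_R0 (fun i => c i * exp (- a i * t)) m) t
            (sum_f_R0 (fun i => (- a i * c i) * exp (- a i * t)) m).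
Proof.
  induction m as [|m IH]; simpl.
  - auto_derive; [exact I | ring].
  - apply (is_derive_plus (fun t => sum_f_R0 (fun i => c i * exp (- a i * t)) m)
             (fun t => c (S m) * exp (- a (S m) * t))); [exact IH|].
    auto_derive; [exact I | ring].
Qed.

Lemma sum_pos_exp (b a : nat -> R) (t : R) (m : nat) :
  (forall i, (i <= m)%nat -> 0 < b i) ->
  0 < sum_f_R0 (fun i => b i * exp (- a i * t)) m.
Proof.
  induction m as [|m IH]; intros Hb.
  - simpl. apply Rmult_lt_0_compat; [apply Hb; lia | apply exp_pos].
  - rewrite tech5. apply Rplus_lt_0_compat.
    + apply IH. intros i Hi. apply Hb. lia.
    + apply Rmult_lt_0_compat; [apply Hb; lia | apply exp_pos].
Qed.

Theorem lemma6 (n : nat) (b a : nat -> R) :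
  (2 <= n)%nat ->
  (forall i, (i < n)%nat -> 0 < b i) ->
  (forall i, (i < n)%nat -> 0 < a i) ->
  (forall i, (i + 1 < n)%nat -> a i <> a (i + 1)%nat) ->
  (forall t, 0 <= t ->
     (Derive (expsum n b a) t) ^ 2
       - expsum n b a t * Derive (Derive (expsum n b a)) t < 0) /\
  (forall t, 0 <= causal (expsum n b a) t) /\
  ~ log_concave (causal (expsum n b a)).
Proof.
  intros Hn Hb Ha Hd.
  assert (Hm : (1 <= n - 1)%nat) by lia.
  assert (Hb' : forall i, (i <= n - 1)%nat -> 0 < b i) by (intros; apply Hb; lia).
  assert (Ha01 : a 0%nat <> a 1%nat) by (apply (Hd 0%nat); lia).
  assert (Hpos : forall t, 0 < expsum n b a t).
  { intro t. unfold expsum. apply sum_pos_exp. exact Hb'. }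
  split; [|split].
  - intros t _.
    set (w := fun i => b i * exp (- a i * t)).
    set (u := fun i => - a i).
    assert (D1 : forall s, Derive (expsum n b a) s =
       sum_f_R0 (fun i => (- a i * b i) * exp (- a i * s)) (n - 1)).
    { intro s. apply is_derive_unique. apply sum_deriv. }
    assert (Dg : Derive (expsum n b a) t =
       sum_f_R0 (fun i => (- a i * b i) * exp (- a i * t)) (n - 1)) by apply D1.
    assert (Dgg : Derive (Derive (expsum n b a)) t =
       sum_f_R0 (fun i => (- a i * (- a i * b i)) * exp (- a i * t)) (n - 1)).
    { rewrite (Derive_ext _ _ t D1). apply is_derive_unique.
      apply (sum_deriv (fun i => - a i * b i) a (n-1) t). }
    rewrite Dg, Dgg.
    assert (H := cs_strict w u (n-1) Hm).
    assert (E0 : expsum n b a t = sum_f_R0 w (n-1)) by reflexivity.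
    assert (E1 : sum_f_R0 (fun i => - a i * b i * exp (- a i * t)) (n - 1)
                 = sum_f_R0 (fun i => w i * u i) (n-1))
      by (apply sum_eq; intros; unfold w, u; ring).
    assert (E2 : sum_f_R0 (fun i => - a i * (- a i * b i) * exp (- a i * t)) (n - 1)
                 = sum_f_R0 (fun i => w i * u i ^ 2) (n-1))
      by (apply sum_eq; intros; unfold w, u; ring).
    rewrite E0, E1, E2.
    enough (0 < sum_f_R0 w (n - 1) * sum_f_R0 (fun i : nat => w i * u i ^ 2) (n - 1) -
          sum_f_R0 (fun i : nat => w i * u i) (n - 1) ^ 2) by lra.
    apply H.
    + intros i Hi. unfold w. pose proof (exp_pos (- a i * t)). pose proof (Hb' i Hi). nra.
    + unfold u. intro E. apply Ha01. lra.
  - intro t. unfold causal. destruct (Rle_dec 0 t); [apply Rlt_le, Hpos | lra].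
  - intros [_ HL].
    assert (HL1 := HL 0 2 (/2) ltac:(lra)).
    replace (/ 2 * 0 + (1 - / 2) * 2) with 1 in HL1 by field.
    replace (1 - / 2) with (/2) in HL1 by field.
    unfold causal in HL1.
    destruct (Rle_dec 0 1); [|lra].
    destruct (Rle_dec 0 0); [|lra].
    destruct (Rle_dec 0 2); [|lra].
    unfold rpow in HL1.
    pose proof (Hpos 0) as P0. pose proof (Hpos 2) as P2. pose proof (Hpos 1) as P1.
    destruct (Req_EM_T (expsum n b a 0) 0); [lra|].
    destruct (Req_EM_T (expsum n b a 2) 0); [lra|].
    destruct (Req_EM_T (/2) 0); [lra|].
    set (A := Rpower (expsum n b a 0) (/ 2)) in HL1.
    set (B := Rpower (expsum n b a 2) (/ 2)) in HL1.
    assert (HA : A * A = expsum n b a 0).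
    { unfold A. rewrite <- Rpower_plus. replace (/2 + /2) with 1 by field. apply Rpower_1; lra. }
    assert (HB : B * B = expsum n b a 2).
    { unfold B. rewrite <- Rpower_plus. replace (/2 + /2) with 1 by field. apply Rpower_1; lra. }
    assert (HA0 : 0 < A) by (unfold A, Rpower; apply exp_pos).
    assert (HB0 : 0 < B) by (unfold B, Rpower; apply exp_pos).
    assert (Hineq : expsum n b a 0 * expsum n b a 2 <= expsum n b a 1 ^ 2).
    { rewrite <- HA, <- HB. assert (0 < A * B) by nra. nra. }
    set (u := fun i => exp (- a i)).
    assert (H := cs_strict b u (n-1) Hm Hb').
    assert (E0 : expsum n b a 0 = sum_f_R0 b (n-1)).
    { unfold expsum. apply sum_eq. intros. rewrite Rmult_0_r, exp_0. ring. }
    assert (E1 : expsum n b a 1 = sum_f_R0 (fun i => b i * u i) (n-1)).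
    { unfold expsum. apply sum_eq. intros. unfold u. rewrite Rmult_1_r. ring. }
    assert (E2 : expsum n b a 2 = sum_f_R0 (fun i => b i * u i ^ 2) (n-1)).
    { unfold expsum. apply sum_eq. intros. unfold u.
      replace (- a i * 2) with (- a i + - a i) by ring. rewrite exp_plus. ring. }
    rewrite E0, E1, E2 in Hineq.
    assert (u 0%nat <> u 1%nat).
    { unfold u. intro E. apply exp_inv in E. apply Ha01. lra. }
    specialize (H H0). lra.
Qed.
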